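(* Let $R$ be a dp-minimal integral domain with fraction field $K$ and maximal ideal $\mathfrak M$. For every prime ideal $\mathfrak p\neq\mathfrak M$ of $R$ we have $\mathfrak p:\mathfrak p=R_{\mathfrak p}$. If moreover $R$ is not a valuation ring, then $\mathfrak M^{-1}=\mathfrak M:\mathfrak M$.
   Context: Rings are commutative with identity; dp-minimal means the theory in the language of rings has dp-rank $1$ (such domains are local). For an ideal $I$ of a domain $R$ with fraction field $K$: $I:I=\{x\in K: xI\subseteq I\}$ and $I^{-1}=\{x\in K: xI\subseteq R\}$. *)

(* Defs.v *)
From HB Require Import structures.
From mathcomp Require Import all_boot all_order all_algebra.
Set Implicit Arguments. Unset Strict Implicit. Unset Printing Implicit Defensive.
Import GRing.Theory.
Local Open Scope ring_scope.

Definition is_ideal (R : comNzRingType) (I : R -> Prop) : Prop :=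
  [/\ I 0, (forall a b, I a -> I b -> I (a + b)) & (forall r a, I a -> I (r * a))].

Definition is_prime_ideal (R : comNzRingType) (P : R -> Prop) : Prop :=
  [/\ is_ideal P, ~ P 1 & (forall a b, P (a * b) -> P a \/ P b)].

Definition is_maximal_ideal (R : comNzRingType) (M : R -> Prop) : Prop :=
  [/\ is_ideal M, ~ M 1 &
      (forall J : R -> Prop, is_ideal J -> (forall a, M a -> J a) ->
         (forall a, J a <-> M a) \/ J 1)].

Definition is_the_maximal_ideal (R : comNzRingType) (M : R -> Prop) : Prop :=
  is_maximal_ideal M /\
  (forall J : R -> Prop, is_ideal J -> ~ J 1 -> forall a, J a -> M a).

Notation Frac R := {fraction R}.
Notation tofr := (@FracField.tofrac _).

Definition inI (R : idomainType) (I : R -> Prop) (x : Frac R) : Prop :=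
  exists a, I a /\ x = tofr a.

Definition colon_self (R : idomainType) (I : R -> Prop) (x : Frac R) : Prop :=
  forall a, I a -> inI I (x * tofr a).

Definition ideal_inv (R : idomainType) (I : R -> Prop) (x : Frac R) : Prop :=
  forall a, I a -> exists r : R, x * tofr a = tofr r.

Definition localization (R : idomainType) (P : R -> Prop) (x : Frac R) : Prop :=
  exists r s : R, ~ P s /\ x = tofr r / tofr s.

Definition valuation_ring (R : idomainType) : Prop :=
  forall x : Frac R, x != 0 ->
    (exists r : R, x = tofr r) \/ (exists r : R, x^-1 = tofr r).

(* Formulas: GRing.formula R (first-order ring formulas; constants from R are
   allowed as parameters, which does not change dp-rank; the Unit predicate and
   inverse are definable in the ring language).  In an environment [c :: a],
   variable 'X_0 plays the role of the single object variable x and the tail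
   [a] gives the parameter tuple y.
   By compactness, Th(R) has dp-rank >= 2 iff there are phi(x;y), psi(x;z)
   admitting ICT patterns of every finite size n in R itself. *)
Definition ict_pattern (R : unitRingType) (phi psi : GRing.formula R) (n : nat)
  : Prop :=
  exists a b : nat -> seq R,
    forall i j, (i < n)%N -> (j < n)%N ->
      exists c : R, forall k l, (k < n)%N -> (l < n)%N ->
        (GRing.holds (c :: a k) phi <-> k = i) /\
        (GRing.holds (c :: b l) psi <-> l = j).

Definition dp_minimal (R : unitRingType) : Prop :=
  forall phi psi : GRing.formula R, exists n : nat, ~ ict_pattern phi psi n.

(* Main.v *)
Require Import Defs.
From mathcomp Require Import all_boot all_order all_algebra.
From Stdlib Require Import Classical.
From mathcomp Require Import ring.
Set Implicit Arguments. Unset Strict Implicit.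
Import GRing.Theory.
Local Open Scope ring_scope.

Definition dvd (R : comNzRingType) (v x : R) := exists w, x = v * w.

Definition phi0 (R : unitRingType) : GRing.formula R :=
  GRing.Exists 3 (GRing.Equal (GRing.Add (GRing.Var R 0) (GRing.Opp (GRing.Var R 1)))
                              (GRing.Mul (GRing.Var R 2) (GRing.Var R 3))).

Lemma holds_phi0 (R : comUnitRingType) (c y1 y2 : R) :
  GRing.holds [:: c; y1; y2] (phi0 R) <-> dvd y2 (c - y1).
Proof. by []. Qed.

Lemma dp_core (R : comUnitRingType) : dp_minimal R ->
  exists n, forall (u v : R) (g h : nat -> R),
    (forall k, dvd u (g k)) -> (forall l, dvd v (h l)) ->
    ~ ((forall i k, (i < n)%N -> (k < n)%N -> dvd v (g i - g k) -> i = k) /\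
       (forall j l, (j < n)%N -> (l < n)%N -> dvd u (h j - h l) -> j = l)).
Proof.
move=> dp; have [n Hn] := dp (phi0 R) (phi0 R).
exists n => u v g h Hg Hh [Dg Dh]; apply: Hn.
exists (fun k => [:: g k; v]), (fun l => [:: h l; u]) => i j Hi Hj.
exists (g i + h j) => k l Hk Hl; split; rewrite holds_phi0; split.
- move=> [w Hw]; apply/esym/(Dg i k Hi Hk).
  have [w' Hw'] := Hh j; exists (w - w').
  rewrite mulrBr -Hw -Hw'; ring.
- move=> ->; have [w' Hw'] := Hh j; exists w'; by rewrite addrAC subrr add0r.
- move=> [w Hw]; apply/esym/(Dh j l Hj Hl).
  have [w' Hw'] := Hg i; exists (w - w').
  rewrite mulrBr -Hw -Hw'; ring.
- move=> ->; have [w' Hw'] := Hg i; exists w'; by rewrite addrK.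
Qed.

Lemma frac_rep (R : idomainType) (x : {fraction R}) :
  exists r t : R, t != 0 /\ x = tofr r / tofr t.
Proof.
elim/quotW: x => y.
exists (\n_y), (\d_y); split; first exact: denom_ratioP.
have Hd : tofr \d_y != 0 by rewrite tofrac_eq0 denom_ratioP.
apply: (mulIf Hd); rewrite mulfVK //.
unlock FracField.tofrac. rewrite -[LHS]/(FracField.mul _ _) -FracField.pi_mul.
apply/eqmodP; rewrite /= FracField.equivfE /FracField.mulf.
rewrite !numden_Ratio ?oner_eq0 ?mulf_neq0 ?denom_ratioP ?oner_eq0 //.
by rewrite !mulr1 mulrC.
Qed.


Section S.
Variable R : idomainType.
Variable M : R -> Prop.
Hypothesis HM : is_the_maximal_ideal M.

Lemma M_ideal : is_ideal M.
Proof. by case: HM => -[]. Qed.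

Lemma M_not1 : ~ M 1.
Proof. by case: HM => -[]. Qed.

Lemma M_mul r a : M a -> M (r * a).
Proof. by case: M_ideal => _ _ H; apply: H. Qed.

Lemma M_add a b : M a -> M b -> M (a + b).
Proof. by case: M_ideal => _ H _; apply: H. Qed.

Lemma unitM x : ~ M x -> exists e, e * x = 1.
Proof.
move=> nMx; apply: NNPP => ne; apply: nMx.
case: HM => _ H; apply: (H (fun z => exists r, z = r * x)).
- split; first by exists 0; rewrite mul0r.
  + by move=> a b [r1 ->] [r2 ->]; exists (r1 + r2); rewrite mulrDl.
  + by move=> r a [r1 ->]; exists (r * r1); rewrite mulrA.
- by move=> [r Hr]; apply: ne; exists r.
- by exists 1; rewrite mul1r.
Qed.

Lemma M_exp s m : M s -> (0 < m)%N -> M (s ^+ m).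
Proof. by move=> Ms; case: m => // m _; rewrite exprSr; apply: M_mul. Qed.

Lemma unit_1sub s m : M s -> (0 < m)%N -> exists e, e * (1 - s ^+ m) = 1.
Proof.
move=> Ms m0; apply: unitM => H; apply: M_not1.
have -> : 1 = (1 - s ^+ m) + s ^+ m by rewrite subrK.
by apply: M_add => //; apply: M_exp.
Qed.

Lemma dvd_cancel_unit (v x y e : R) : e * y = 1 -> dvd v (x * y) -> dvd v x.
Proof.
move=> Hey [w Hw]; exists (w * e).
by rewrite mulrA -Hw -mulrA (mulrC y) Hey mulr1.
Qed.

Lemma dist_pow s (u v : R) i k : M s -> dvd v (u * s ^+ i - u * s ^+ k) -> i <> k ->
  dvd v (u * s ^+ (minn i k)).
Proof.
move=> Ms Hd nik; case: (ltngtP i k) => [lt|lt|eq]; last by [].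
- have [e He] := unit_1sub Ms (ltac:(by rewrite subn_gt0) : (0 < k - i)%N) .
  apply: (dvd_cancel_unit He).
  have ->: u * s ^+ i * (1 - s ^+ (k - i)) = u * s ^+ i - u * s ^+ k.
    by rewrite mulrBr mulr1 -mulrA -exprD (subnKC (ltnW lt)).
  exact: Hd.
- have [e He] := unit_1sub Ms (ltac:(by rewrite subn_gt0) : (0 < i - k)%N) .
  apply: (dvd_cancel_unit He).
  have ->: u * s ^+ k * (1 - s ^+ (i - k)) = - (u * s ^+ i - u * s ^+ k).
    by rewrite mulrBr mulr1 -mulrA -exprD (subnKC (ltnW lt)) opprB.
  by case: Hd => w ->; exists (- w); rewrite mulrN.
Qed.

Variable n : nat.
Hypothesis Hn : forall (u v : R) (g h : nat -> R),
    (forall k, dvd u (g k)) -> (forall l, dvd v (h l)) ->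
    ~ ((forall i k, (i < n)%N -> (k < n)%N -> dvd v (g i - g k) -> i = k) /\
       (forall j l, (j < n)%N -> (l < n)%N -> dvd u (h j - h l) -> j = l)).

Lemma core s u v : M s ->
  (exists i, (i < n)%N /\ dvd v (u * s ^+ i)) \/ (exists j, (j < n)%N /\ dvd u (v * s ^+ j)).
Proof.
move=> Ms; apply: NNPP => H.
apply: (Hn (g := fun k => u * s ^+ k) (h := fun l => v * s ^+ l)).
- by move=> k; exists (s ^+ k).
- by move=> l; exists (s ^+ l).
split.
- move=> i k Hi Hk Hd; apply: NNPP => nik; apply: H; left; exists (minn i k); split.
    by rewrite gtn_min Hi.
  exact: dist_pow.
- move=> i k Hi Hk Hd; apply: NNPP => nik; apply: H; right; exists (minn i k); split.
    by rewrite gtn_min Hi.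
  exact: dist_pow.
Qed.

Lemma cancel_pow (s a : R) i : s != 0 -> (i < n)%N -> dvd (s ^+ n) (a * s ^+ i) -> dvd s a.
Proof.
move=> s0 Hi [w Hw].
have Hsi : s ^+ i != 0 by rewrite expf_neq0.
have : a * s ^+ i = (s ^+ (n - i) * w) * s ^+ i.
  by rewrite Hw mulrAC -exprD subnK // ltnW.
move/(mulIf Hsi) => ->.
case E: (n - i)%N => [|m]; first by move: E => /eqP; rewrite subn_eq0 leqNgt Hi.
by exists (s ^+ m * w); rewrite exprS mulrA.
Qed.

Section Prime.
Variable P : R -> Prop.
Hypothesis HP : is_prime_ideal P.

Lemma P0 : P 0. Proof. by case: HP => -[]. Qed.
Lemma Pmul r a : P a -> P (r * a). Proof. by case: HP => -[] _ _ H _ _; apply: H. Qed.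
Lemma Pprime a b : P (a * b) -> P a \/ P b. Proof. by case: HP => _ _; apply. Qed.
Lemma Pexp s m : ~ P s -> ~ P (s ^+ m).
Proof.
move=> nPs; elim: m => [|m IH]; first by rewrite expr0; case: HP.
by rewrite exprS => /Pprime [].
Qed.
Lemma nP_neq0 s : ~ P s -> s != 0.
Proof. by move=> nPs; apply/eqP => s0; apply: nPs; rewrite s0; apply: P0. Qed.

Lemma G1 s a : ~ P s -> P a -> dvd s a.
Proof.
move=> nPs Pa; have [Ms|nMs] := classic (M s); last first.
  by have [e He] := unitM nMs; exists (e * a); rewrite mulrA (mulrC s) He mul1r.
case: (core a (s ^+ n) Ms) => [[i [Hi Hd]]|[j [Hj [w Hw]]]].
  exact: (cancel_pow (nP_neq0 nPs) Hi Hd).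
exfalso; apply: (@Pexp s (n + j) nPs); rewrite exprD Hw mulrC; exact: Pmul.
Qed.
End Prime.

Lemma div_eq (r t w q : R) : t != 0 -> q != 0 -> r * q = t * w ->
  tofr r / tofr t = tofr w / tofr q.
Proof.
move=> t0 q0 E; apply/eqP; rewrite eqr_div ?tofrac_eq0 // -!tofracM tofrac_eq.
by rewrite E mulrC.
Qed.

Lemma part1 (P : R -> Prop) : is_prime_ideal P -> ~ (forall a, P a <-> M a) ->
  forall x : {fraction R}, colon_self P x <-> localization P x.
Proof.
move=> HP nPM x.
have PsubM : forall a, P a -> M a.
  case: HM => _ H; apply: H; first by case: HP.
  by case: HP.
have [s0 [Ms0 nPs0]] : exists s, M s /\ ~ P s.
  apply: NNPP => H; apply: nPM => a; split; first exact: PsubM.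
  move=> Ma; apply: NNPP => nPa; apply: H; by exists a.
have s00 := nP_neq0 HP nPs0.
split.
- move=> Hc; have [r [t [t0 Ex]]] := frac_rep x; rewrite Ex in Hc *.
  case: (core r t Ms0) => [[i [_ [w Hw]]]|[j [_ [w Hw]]]].
    exists w, (s0 ^+ i); split; first exact: Pexp.
    by apply: div_eq => //; rewrite expf_neq0.
  have [Pw|nPw] := classic (P w).
    have [a' [Pa' Ea']] := Hc w Pw.
    exfalso; apply: (@Pexp P HP s0 j nPs0).
    suff -> : s0 ^+ j = a' by [].
    apply/eqP; rewrite -tofrac_eq -Ea' eq_sym.
    rewrite mulrAC -tofracM -Hw tofracM mulrAC mulfV ?mul1r //.
    by rewrite tofrac_eq0.
  exists (s0 ^+ j), w; split => //.
  apply: div_eq => //; first exact: (nP_neq0 HP).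
- move=> [r [s' [nPs' ->]]] a Pa.
  have [w Hw] := G1 HP nPs' Pa.
  have Pw : P w by move: Pa; rewrite Hw => /(Pprime HP) [].
  exists (r * w); split; first exact: (Pmul HP).
  rewrite Hw (tofracM s') mulrA mulfVK -?tofracM //.
  by rewrite tofrac_eq0; apply: (nP_neq0 HP).
Qed.

Lemma split_pow a (Hdiv : forall m, M m -> dvd a m) w i :
  dvd (a ^+ i) w \/ exists k u e, [/\ (k < i)%N, w = a ^+ k * u & e * u = 1].
Proof.
elim: i => [|i [[w' Hw']|[k [u [e [Hk Hw He]]]]]].
- by left; exists w; rewrite expr0 mul1r.
- have [Mw'|nMw'] := classic (M w').
    have [w'' Hw''] := Hdiv w' Mw'.
    by left; exists w''; rewrite Hw' Hw'' exprSr mulrA.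
  have [e He] := unitM nMw'.
  by right; exists i, w', e; split.
- by right; exists k, u, e; split => //; apply: ltnW.
Qed.

Lemma valcase a (a0 : a != 0) (Hdiv : forall m, M m -> dvd a m) (b c w : R) i :
  b != 0 -> c != 0 -> b * a ^+ i = c * w ->
  (exists r, tofr b / tofr c = tofr r) \/ (exists r, tofr c / tofr b = tofr r).
Proof.
move=> b0 c0 E.
have Fc : tofr c != 0 by rewrite tofrac_eq0.
have Fb : tofr b != 0 by rewrite tofrac_eq0.
case: (split_pow Hdiv w i) => [[w' Hw']|[k [u [e [Hk Hw He]]]]].
- have Hai : a ^+ i != 0 by rewrite expf_neq0.
  have Eb : b = c * w'.
    apply: (mulIf Hai); rewrite E Hw' mulrCA; exact: mulrC.
  by left; exists w'; rewrite Eb tofracM mulrAC mulfV // mul1r.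
- have Hak : a ^+ k != 0 by rewrite expf_neq0.
  have E2 : b * a ^+ (i - k) = c * u.
    apply: (mulIf Hak); rewrite -mulrA -exprD subnK; last exact: ltnW.
    rewrite E Hw mulrCA; exact: mulrC.
  have Ec : c = b * (a ^+ (i - k) * e).
    by rewrite mulrA E2 -mulrA (mulrC u) He mulr1.
  by right; exists (a ^+ (i - k) * e); rewrite Ec tofracM mulrAC mulfV // mul1r.
Qed.

Lemma part2 : ~ valuation_ring R ->
  forall x : {fraction R}, ideal_inv M x <-> colon_self M x.
Proof.
move=> nval x; split; last first.
  by move=> Hc a Ma; have [a' [_ E]] := Hc a Ma; exists a'.
move=> Hi a Ma; have [r Er] := Hi a Ma.
have [Mr|nMr] := classic (M r); first by exists r.
exfalso; apply: nval.
have [e He] := unitM nMr.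
have M0 : M 0 by case: M_ideal.
have a0 : a != 0.
  apply/eqP => a0; apply: nMr; move: Er; rewrite a0 tofrac0 mulr0 => /eqP.
  by rewrite eq_sym tofrac_eq0 => /eqP ->.
have Hdiv : forall m, M m -> dvd a m.
  move=> m Mm; have [rm Erm] := Hi m Mm.
  have E : tofr (r * m) = tofr (a * rm) by rewrite !tofracM -Er -Erm; ring.
  have E' : r * m = a * rm by apply/eqP; rewrite -tofrac_eq; apply/eqP.
  exists (e * rm); rewrite -[m]mul1r -He -mulrA E' mulrCA //.
move=> y y0.
have [b [c [c0 Ey]]] := frac_rep y.
have b0 : b != 0.
  by apply: contraNneq y0 => b0; rewrite Ey b0 tofrac0 mul0r.
case: (core b c Ma) => [[i [_ [w Hw]]]|[j [_ [w Hw]]]].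
- case: (valcase a0 Hdiv b0 c0 Hw) => [[r' Er']|[r' Er']].
    by left; exists r'; rewrite Ey.
  by right; exists r'; rewrite Ey invf_div.
- case: (valcase a0 Hdiv c0 b0 Hw) => [[r' Er']|[r' Er']].
    by right; exists r'; rewrite Ey invf_div.
  by left; exists r'; rewrite Ey.
Qed.

End S.

Unset Implicit Arguments.

Theorem mainTheorem12 (R : idomainType) (M : R -> Prop) :
  dp_minimal R -> is_the_maximal_ideal M ->
  (forall P : R -> Prop, is_prime_ideal P -> ~ (forall a, P a <-> M a) ->
     forall x : {fraction R}, colon_self P x <-> localization P x) /\
  (~ valuation_ring R ->
     forall x : {fraction R}, ideal_inv M x <-> colon_self M x).
Proof.
move=> dp HM; have [n Hn] := dp_core dp; split.
- move=> P HP nPM x; exact: (part1 HM Hn HP nPM x).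
- move=> nval x; exact: (part2 HM Hn nval x).
Qed.
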